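(* Let $N\geqslant 2$, $c_0<c_1<\dots<c_N$ in $\mathbb{R}$, and let $f:[c_0,c_N]\to[c_0,c_N]$ be a piecewise contracting map with contraction pieces $X_1=[c_0,c_1)$, $X_2=(c_1,c_2),\dots,X_N=(c_{N-1},c_N]$ which satisfies the separation property. Suppose there exists $i\in\{1,\dots,N-1\}$ such that (1) for some $j\in\{i,i+1\}$, $f_j(c_i)\in\widetilde X$ and $\{f^n(f_j(c_i))\}_{n\in\mathbb{N}}$ is dense in $\Lambda$; and (2) $c_i\in\Delta_{lr}(x_0)$ for some $x_0\in\widetilde X$. Then for any $\epsilon>0$ and any $y\in\Lambda$ such that $\Lambda\cap(y,y+\nu)\neq\emptyset$ for all $\nu>0$ (resp. $\Lambda\cap(y-\nu,y)\neq\emptyset$ for all $\nu>0$), there exists $l\geqslant 0$ with $f^l(x_0)\in(y,y+\epsilon)$ (resp. $f^l(x_0)\in(y-\epsilon,y)$).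
   Context: $\Delta=\{c_1,\dots,c_{N-1}\}$. Piecewise contracting: $f$ is discontinuous at each $c_i$, $1\leqslant i\leqslant N-1$, and there is $\lambda\in(0,1)$ with $|f(x)-f(y)|\leqslant\lambda|x-y|$ for $x,y$ in the same $X_i$; $f_i:\overline{X_i}\to[c_0,c_N]$ is the continuous extension of $f|_{X_i}$. Separation property: each $f_i$ injective and $f_i(\overline{X_i})\cap f_j(\overline{X_j})=\emptyset$ for $i\neq j$. $\widetilde X:=\bigcap_{n\geqslant0}f^{-n}([c_0,c_N]\setminus\Delta)$. Atoms: $F_i(A):=\overline{f(A\cap X_i)}$, $A_{i_1\dots i_n}:=F_{i_n}\circ\dots\circ F_{i_1}([c_0,c_N])$ is an atom of generation $n$ if non-empty; $\mathcal{A}_n$ is their set; the attractor is $\Lambda:=\bigcap_{n\geqslant1}\bigcup_{A\in\mathcal{A}_n}A$; $\mathcal{A}_n(x):=\{A\in\mathcal{A}_n:\exists t\in\mathbb{N}, f^{t+n}(x)\in A\}$. $c_i\in\Delta_{lr}(x)$ means: for every $n\geqslant1$ there is $A\in\mathcal{A}_n(x)$ with $c_i\in A$, $f^{t+n}(x)\in A\cap X_i$ and $f^{t'+n}(x)\in A\cap X_{i+1}$ for some $t,t'\in\mathbb{N}$. *)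

(* Defs.v *)
From Stdlib Require Import Reals List.
Open Scope R_scope.

Definition full (N : nat) (c : nat -> R) (x : R) : Prop := c 0%nat <= x <= c N.

(* Contraction pieces: X_1 = [c_0,c_1), X_k = (c_{k-1},c_k) for 1<k<N,
   X_N = (c_{N-1},c_N]  (for 1 <= k <= N, N >= 2). *)
Definition Xpiece (N : nat) (c : nat -> R) (k : nat) (x : R) : Prop :=
  (if Nat.eqb k 1 then c 0%nat <= x else c (k - 1)%nat < x) /\
  (if Nat.eqb k N then x <= c N else x < c k).

Definition closure (S : R -> Prop) (x : R) : Prop :=
  forall eps, 0 < eps -> exists y, S y /\ Rabs (x - y) < eps.

Definition cont_within (D : R -> Prop) (g : R -> R) (x : R) : Prop :=
  forall eps, 0 < eps -> exists delta, 0 < delta /\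
    forall y, D y -> Rabs (y - x) < delta -> Rabs (g y - g x) < eps.

Definition piecewise_contracting (N : nat) (c : nat -> R) (f : R -> R) : Prop :=
  (forall i, (1 <= i <= N - 1)%nat -> ~ cont_within (full N c) f (c i)) /\
  exists lam, 0 < lam < 1 /\
    forall k x y, (1 <= k <= N)%nat -> Xpiece N c k x -> Xpiece N c k y ->
      Rabs (f x - f y) <= lam * Rabs (x - y).

Definition is_extension (N : nat) (c : nat -> R) (f : R -> R) (fi : nat -> R -> R) : Prop :=
  forall k, (1 <= k <= N)%nat ->
    (forall x, c (k - 1)%nat <= x <= c k ->
       cont_within (fun y => c (k - 1)%nat <= y <= c k) (fi k) x) /\
    (forall x, Xpiece N c k x -> fi k x = f x).

Definition separation (N : nat) (c : nat -> R) (fi : nat -> R -> R) : Prop :=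
  (forall k, (1 <= k <= N)%nat -> forall x y,
     c (k - 1)%nat <= x <= c k -> c (k - 1)%nat <= y <= c k ->
     fi k x = fi k y -> x = y) /\
  (forall k l x y, (1 <= k <= N)%nat -> (1 <= l <= N)%nat -> k <> l ->
     c (k - 1)%nat <= x <= c k -> c (l - 1)%nat <= y <= c l ->
     fi k x <> fi l y).

(* X~ = intersection over n of f^{-n}([c_0,c_N] \ Delta). *)
Definition Xtilde (N : nat) (c : nat -> R) (f : R -> R) (x : R) : Prop :=
  forall n : nat, full N c (Nat.iter n f x) /\
    forall k, (1 <= k <= N - 1)%nat -> Nat.iter n f x <> c k.

Definition Fmap (N : nat) (c : nat -> R) (f : R -> R) (k : nat) (A : R -> Prop) : R -> Prop :=
  closure (fun y => exists x, A x /\ Xpiece N c k x /\ y = f x).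

(* A_{i_1...i_n} = F_{i_n} o ... o F_{i_1}([c_0,c_N]) for w = [i_1; ...; i_n]. *)
Definition atom (N : nat) (c : nat -> R) (f : R -> R) (w : list nat) : R -> Prop :=
  fold_left (fun A k => Fmap N c f k A) w (full N c).

Definition valid_word (N n : nat) (w : list nat) : Prop :=
  length w = n /\ Forall (fun k => (1 <= k <= N)%nat) w.

(* Attractor: Lambda = intersection over n >= 1 of the union of the atoms of
   generation n (a point lying in A_w makes A_w non-empty, i.e. an atom). *)
Definition attractor (N : nat) (c : nat -> R) (f : R -> R) (x : R) : Prop :=
  forall n, (1 <= n)%nat -> exists w, valid_word N n w /\ atom N c f w x.

Definition in_Delta_lr (N : nat) (c : nat -> R) (f : R -> R) (i : nat) (x : R) : Prop :=
  forall n, (1 <= n)%nat -> exists w, valid_word N n w /\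
    atom N c f w (c i) /\
    (exists t, atom N c f w (Nat.iter (t + n) f x) /\ Xpiece N c i (Nat.iter (t + n) f x)) /\
    (exists t', atom N c f w (Nat.iter (t' + n) f x) /\
                Xpiece N c (S i) (Nat.iter (t' + n) f x)).

(* Main.v *)
Require Import Defs.
From Stdlib Require Import Reals List Lra Lia.
Open Scope R_scope.

Ltac rabs_elim :=
  repeat match goal with
  | |- context[Rabs ?x] => unfold Rabs; destruct (Rcase_abs x)
  | H : context[Rabs ?x] |- _ => unfold Rabs in H; destruct (Rcase_abs x)
  end.

Lemma iter_full N c f : (forall x, full N c x -> full N c (f x)) ->
  forall n x, full N c x -> full N c (Nat.iter n f x).
Proof. intros Hf n; induction n; intros x Hx; simpl; auto. Qed.

Lemma c_mono N c : (forall k, (k < N)%nat -> c k < c (S k)) ->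
  forall k, (k <= N)%nat -> c 0%nat <= c k.
Proof.
  intros Hc k; induction k; intros Hk; [lra|].
  specialize (Hc k ltac:(lia)); specialize (IHk ltac:(lia)); lra.
Qed.

Lemma locate N c q : (forall k, (k < N)%nat -> c k < c (S k)) ->
  forall M, (1 <= M <= N)%nat -> c 0%nat <= q <= c M ->
  exists k, (1 <= k <= M)%nat /\ c (k - 1)%nat <= q <= c k.
Proof.
  intros Hc M; induction M; intros HM Hq; [lia|].
  destruct (Nat.eq_dec M 0) as [->|HM0].
  - exists 1%nat; simpl; split; [lia|lra].
  - destruct (Rle_dec q (c M)) as [Hle|Hgt].
    + destruct (IHM ltac:(lia) ltac:(lra)) as [k [Hk1 Hk2]].
      exists k; split; [lia|auto].
    + exists (S M); split; [lia|]. replace (S M - 1)%nat with M by lia. lra.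
Qed.

Lemma xpiece_closed N c k x : Xpiece N c k x -> c (k - 1)%nat <= x <= c k.
Proof.
  unfold Xpiece; intros [H1 H2].
  destruct (Nat.eqb k 1) eqn:E1; destruct (Nat.eqb k N) eqn:E2;
    try apply Nat.eqb_eq in E1; try apply Nat.eqb_eq in E2; subst; simpl in *;
    split; try lra.
Qed.

Lemma f_local N c f : (1 <= N)%nat -> (forall k, (k < N)%nat -> c k < c (S k)) ->
  piecewise_contracting N c f ->
  forall q, full N c q -> (forall k, (1 <= k <= N - 1)%nat -> q <> c k) ->
  exists d, 0 < d /\ forall y, full N c y -> Rabs (y - q) < d ->
    Rabs (f y - f q) <= Rabs (y - q).
Proof.
  intros HN Hc [_ [lam [Hlam Hlip]]] q Hq Hnc.
  destruct (locate N c q Hc N ltac:(lia) Hq) as [k [Hk Hqk]].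
  assert (Hlow : exists d1, 0 < d1 /\ forall y, full N c y -> Rabs (y - q) < d1 ->
     (if Nat.eqb k 1 then c 0%nat <= y else c (k - 1)%nat < y)).
  { destruct (Nat.eqb k 1) eqn:E.
    - exists 1; split; [lra|]. intros y Hy _; unfold full in Hy; lra.
    - apply Nat.eqb_neq in E.
      assert (q <> c (k - 1)%nat) by (apply Hnc; lia).
      exists (q - c (k - 1)%nat); split; [lra|].
      intros y _ Hy; apply Rabs_def2 in Hy; lra. }
  assert (Hup : exists d2, 0 < d2 /\ forall y, full N c y -> Rabs (y - q) < d2 ->
     (if Nat.eqb k N then y <= c N else y < c k)).
  { destruct (Nat.eqb k N) eqn:E.
    - exists 1; split; [lra|]. intros y Hy _; unfold full in Hy; lra.
    - apply Nat.eqb_neq in E.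
      assert (q <> c k) by (apply Hnc; lia).
      exists (c k - q); split; [lra|].
      intros y _ Hy; apply Rabs_def2 in Hy; lra. }
  destruct Hlow as [d1 [Hd1 Hl]]; destruct Hup as [d2 [Hd2 Hu]].
  exists (Rmin d1 d2); split; [apply Rmin_glb_lt; auto|].
  intros y Hy Hyq.
  assert (Xpiece N c k y).
  { split; [apply Hl|apply Hu]; auto;
      eapply Rlt_le_trans; eauto; [apply Rmin_l|apply Rmin_r]. }
  assert (Xpiece N c k q).
  { assert (Hr : Rabs (q - q) < Rmin d1 d2).
    { replace (q - q) with 0 by ring. rewrite Rabs_R0. apply Rmin_glb_lt; auto. }
    split; [apply Hl|apply Hu]; auto;
      eapply Rlt_le_trans; eauto; [apply Rmin_l|apply Rmin_r]. }
  specialize (Hlip k y q Hk H H0).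
  pose proof (Rabs_pos (y - q)). nra.
Qed.

Lemma iter_local N c f : (1 <= N)%nat -> (forall k, (k < N)%nat -> c k < c (S k)) ->
  (forall x, full N c x -> full N c (f x)) ->
  piecewise_contracting N c f ->
  forall p, Xtilde N c f p -> forall m,
  exists d, 0 < d /\ forall y, full N c y -> Rabs (y - p) < d ->
    Rabs (Nat.iter m f y - Nat.iter m f p) <= Rabs (y - p).
Proof.
  intros HN Hc Hf Hpc p Hp m; induction m.
  - exists 1; split; [lra|]. intros; simpl; lra.
  - destruct IHm as [dm [Hdm Hm]].
    destruct (Hp m) as [Hq Hnq].
    destruct (f_local N c f HN Hc Hpc _ Hq Hnq) as [d' [Hd' Hl]].
    exists (Rmin dm d'); split; [apply Rmin_glb_lt; auto|].
    intros y Hy Hyp.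
    assert (H1 : Rabs (Nat.iter m f y - Nat.iter m f p) <= Rabs (y - p)).
    { apply Hm; auto. eapply Rlt_le_trans; eauto; apply Rmin_l. }
    assert (H2 : Rabs (y - p) < d') by (eapply Rlt_le_trans; eauto; apply Rmin_r).
    simpl. eapply Rle_trans; [apply Hl|]; auto.
    + apply iter_full; auto.
    + lra.
Qed.

Definition diam (A : R -> Prop) (D : R) := forall x y, A x -> A y -> Rabs (x - y) <= D.

Lemma Fmap_diam N c f k A D lam : 0 <= lam ->
  (forall x y, Xpiece N c k x -> Xpiece N c k y -> Rabs (f x - f y) <= lam * Rabs (x - y)) ->
  diam A D -> diam (Fmap N c f k A) (lam * D).
Proof.
  intros Hl Hlip HA u v Hu Hv.
  apply Rnot_lt_le; intro H.
  set (e := (Rabs (u - v) - lam * D) / 3).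
  assert (He : 0 < e) by (unfold e; lra).
  destruct (Hu e He) as [u' [[a [Ha [Hxa ->]]] Hu']].
  destruct (Hv e He) as [v' [[b [Hb [Hxb ->]]] Hv']].
  assert (Hab : Rabs (f a - f b) <= lam * D).
  { eapply Rle_trans; [apply Hlip; auto|]. apply Rmult_le_compat_l; auto. }
  assert (He3 : 3 * e = Rabs (u - v) - lam * D) by (unfold e; field).
  clearbody e. set (LD := lam * D) in *. clearbody LD.
  clear Hlip HA Hu Hv.
  rabs_elim; lra.
Qed.

Lemma atom_diam N c f lam : 0 <= lam ->
  (forall k x y, (1 <= k <= N)%nat -> Xpiece N c k x -> Xpiece N c k y ->
      Rabs (f x - f y) <= lam * Rabs (x - y)) ->
  forall w A D, Forall (fun k => (1 <= k <= N)%nat) w -> diam A D ->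
  diam (fold_left (fun A k => Fmap N c f k A) w A) (lam ^ length w * D).
Proof.
  intros Hl Hlip w; induction w as [|a w IH]; intros A D Hw HA.
  - simpl. replace (1 * D) with D by ring. auto.
  - inversion Hw; subst. simpl.
    replace (lam * lam ^ length w * D) with (lam ^ length w * (lam * D)) by ring.
    apply IH; auto. apply Fmap_diam; auto. intros; apply (Hlip a); auto.
Qed.

Lemma near_orbit N c f fi i j x0 :
  (forall k, (k < N)%nat -> c k < c (S k)) ->
  piecewise_contracting N c f ->
  is_extension N c f fi ->
  (1 <= i <= N - 1)%nat -> (j = i \/ j = S i) ->
  in_Delta_lr N c f i x0 ->
  forall eta, 0 < eta -> exists l, Rabs (Nat.iter l f x0 - fi j (c i)) < eta.
Proof.
  intros Hc [_ [lam [Hlam Hlip]]] Hext Hi Hj HD eta Heta.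
  assert (Hj1 : (1 <= j <= N)%nat) by lia.
  destruct (Hext j Hj1) as [Hcont Heq].
  assert (Hci : c (j - 1)%nat <= c i <= c j).
  { destruct Hj as [->| ->].
    - pose proof (Hc (i - 1)%nat ltac:(lia)). replace (S (i - 1)) with i in H by lia. lra.
    - pose proof (Hc i ltac:(lia)). replace (S i - 1)%nat with i by lia. lra. }
  destruct (Hcont (c i) Hci eta Heta) as [d [Hd Hcd]].
  set (L := c N - c 0%nat).
  assert (HL : 0 <= L) by (unfold L; pose proof (c_mono N c Hc N ltac:(lia)); lra).
  destruct (pow_lt_1_zero lam ltac:(rewrite Rabs_pos_eq; lra) (d / (L + 1))
     ltac:(apply Rdiv_lt_0_compat; lra)) as [Nn HNn].
  set (n := S Nn).
  specialize (HNn n ltac:(unfold n; lia)).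
  rewrite Rabs_pos_eq in HNn by (apply pow_le; lra).
  assert (Hsmall : lam ^ n * (L + 1) < d).
  { apply Rmult_lt_compat_r with (r := L + 1) in HNn; [|lra].
    replace (d / (L + 1) * (L + 1)) with d in HNn by (field; lra). auto. }
  destruct (HD n ltac:(unfold n; lia)) as [w [[Hlen Hw] [Hwc [[t [Ht1 Ht2]] [t' [Ht1' Ht2']]]]]].
  assert (Hdiam : diam (atom N c f w) (lam ^ n * (L + 1))).
  { rewrite <- Hlen. unfold atom. apply atom_diam; auto; try lra.
    intros x y Hx Hy; unfold full in *; unfold L; rabs_elim; lra. }
  assert (Hgen : forall s, atom N c f w (Nat.iter (s + n) f x0) ->
            Xpiece N c j (Nat.iter (s + n) f x0) ->
            Rabs (Nat.iter (S (s + n)) f x0 - fi j (c i)) < eta).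
  { intros s Hs1 Hs2. simpl. rewrite <- Heq by auto.
    apply Hcd.
    - apply (xpiece_closed N); auto.
    - eapply Rle_lt_trans; [apply Hdiam; eauto|]. auto. }
  destruct Hj as [->| ->].
  - exists (S (t + n)). apply Hgen; auto.
  - exists (S (t' + n)). apply Hgen; auto.
Qed.

Theorem lemma6 (N : nat) (c : nat -> R) (f : R -> R) (fi : nat -> R -> R) (i : nat) :
  (2 <= N)%nat ->
  (forall k, (k < N)%nat -> c k < c (S k)) ->
  (forall x, full N c x -> full N c (f x)) ->
  piecewise_contracting N c f ->
  is_extension N c f fi ->
  separation N c fi ->
  (1 <= i <= N - 1)%nat ->
  (exists j, (j = i \/ j = S i) /\
     Xtilde N c f (fi j (c i)) /\
     (forall y, attractor N c f y ->
        closure (fun z => exists n : nat, z = Nat.iter n f (fi j (c i))) y)) ->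
  forall x0, Xtilde N c f x0 -> in_Delta_lr N c f i x0 ->
  forall eps, 0 < eps -> forall y, attractor N c f y ->
    ((forall nu, 0 < nu -> exists z, attractor N c f z /\ y < z < y + nu) ->
       exists l : nat, y < Nat.iter l f x0 < y + eps) /\
    ((forall nu, 0 < nu -> exists z, attractor N c f z /\ y - nu < z < y) ->
       exists l : nat, y - eps < Nat.iter l f x0 < y).
Proof.
  intros HN Hc Hf Hpc Hext Hsep Hi [j [Hj [Hp Hdense]]] x0 Hx0 HD eps Heps y Hy.
  set (p := fi j (c i)) in *.
  assert (Claim : forall a b z, attractor N c f z -> a < z < b ->
            exists l, a < Nat.iter l f x0 < b).
  { intros a b z Hz Hab.
    destruct (Hdense z Hz (Rmin (z - a) (b - z)) ltac:(apply Rmin_glb_lt; lra))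
      as [q [[m ->] Hq]].
    assert (Hq1 : Rabs (z - Nat.iter m f p) < z - a)
      by (apply (Rlt_le_trans _ _ _ Hq); apply Rmin_l).
    assert (Hq2 : Rabs (z - Nat.iter m f p) < b - z)
      by (apply (Rlt_le_trans _ _ _ Hq); apply Rmin_r).
    apply Rabs_def2 in Hq1; apply Rabs_def2 in Hq2.
    set (q := Nat.iter m f p) in *.
    destruct (iter_local N c f ltac:(lia) Hc Hf Hpc p Hp m) as [d [Hd Hloc]].
    destruct (near_orbit N c f fi i j x0 Hc Hpc Hext Hi Hj HD
       (Rmin d (Rmin (q - a) (b - q)))
       ltac:(apply Rmin_glb_lt; [auto|apply Rmin_glb_lt; lra])) as [l Hl].
    assert (Hl1 : Rabs (Nat.iter l f x0 - p) < d)
      by (apply (Rlt_le_trans _ _ _ Hl); apply Rmin_l).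
    assert (Hl2 : Rabs (Nat.iter l f x0 - p) < Rmin (q - a) (b - q))
      by (apply (Rlt_le_trans _ _ _ Hl); apply Rmin_r).
    assert (Hfl : full N c (Nat.iter l f x0)) by apply (Hx0 l).
    specialize (Hloc _ Hfl Hl1). fold q in Hloc.
    assert (H3 : Rabs (Nat.iter m f (Nat.iter l f x0) - q) < Rmin (q - a) (b - q)) by lra.
    assert (H4 : Rabs (Nat.iter m f (Nat.iter l f x0) - q) < q - a)
      by (apply (Rlt_le_trans _ _ _ H3); apply Rmin_l).
    assert (H5 : Rabs (Nat.iter m f (Nat.iter l f x0) - q) < b - q)
      by (apply (Rlt_le_trans _ _ _ H3); apply Rmin_r).
    apply Rabs_def2 in H4; apply Rabs_def2 in H5.
    exists (m + l)%nat. rewrite Nat.iter_add. lra. }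
  split.
  - intros Hr. destruct (Hr eps Heps) as [z [Hz Hz2]].
    apply (Claim y (y + eps) z Hz Hz2).
  - intros Hr. destruct (Hr eps Heps) as [z [Hz Hz2]].
    apply (Claim (y - eps) y z Hz Hz2).
Qed.
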